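(* Let $G=(X,\Sigma,\delta,X_0)$ be an NFA with observable events $\Sigma_o$ and a nonempty set of secret states $X_S\subseteq X$. Then $G$ is Inf-SSO w.r.t. $\Sigma_o$ and $X_S$ if and only if $G$ is $(|\hat X|\,2^{|X\setminus X_S|}-1)$-SSO w.r.t. $\Sigma_o$ and $X_S$, where $\hat X$ is the set of states of $G$ reachable from $X_S$.
   Context: An NFA is $G=(X,\Sigma,\delta,X_0)$ with finite state set $X$, finite event set $\Sigma$, initial states $X_0\subseteq X$, and transition function $\delta:X\times\Sigma\to 2^X$ extended to strings in the usual way. $\Sigma=\Sigma_o\dot\cup\Sigma_{uo}$, and $P:\Sigma^*\to\Sigma_o^*$ is the natural projection erasing unobservable events. $X_{NS}=X\setminus X_S$. A run $x_0\xrightarrow{s_1}x_1\cdots\xrightarrow{s_n}x_n$ means $x_{k+1}\in\delta(x_k,s_{k+1})$, written $x_0\xrightarrow{s}x_n$; it is non-secret if all its states lie in $X_{NS}$. $\hat X$ is the set of states $x$ with $x\in\delta(x_s,w)$ for some $x_s\in X_S$, $w\in\Sigma^*$ (including $X_S$ itself). $K$-SSO ($K\in\mathbb N$): $G$ is strongly $K$-step opaque w.r.t. $\Sigma_o$ and $X_S$ if for every run $x_0\xrightarrow{s}x_s\xrightarrow{t}x_t$ with $x_0\in X_0$, $x_s\in X_S$, $|P(t)|\le K$, there exists a run $x_0'\xrightarrow{s'}x_s'\xrightarrow{t'}x_t'$ with $x_0'\in X_0$, $P(s')=P(s)$, $P(t')=P(t)$, and the subrun $x_s'\xrightarrow{t'}x_t'$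 non-secret. Inf-SSO (strong infinite-step opacity): the same condition required for all such runs with no bound on $|P(t)|$, i.e. $G$ is $K$-SSO for every $K\in\mathbb N$. *)

(* Defs.v *)
From mathcomp Require Import all_boot.
Set Implicit Arguments. Unset Strict Implicit. Unset Printing Implicit Defensive.

(* An NFA G = (X, Sigma, delta, X0); the partition Sigma = Sigma_o (+) Sigma_uo
   is given by a boolean predicate [obs] (Sigma_o = [pred e | obs e]). *)
Record nfa := NFA {
  stT : finType;
  evT : finType;
  delta : stT -> evT -> {set stT};
  init : {set stT}
}.

Section Runs.
Variable G : nfa.
Local Notation X := (stT G).
Local Notation E := (evT G).

(* A run x0 -s1-> x1 ... -sn-> xn is encoded by its start state x0 and the
   sequence of steps (s_{k+1}, x_{k+1}). *)
Fixpoint is_run (x : X) (r : seq (E * X)) : bool :=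
  if r is (e, y) :: r' then (y \in @delta G x e) && is_run y r' else true.

Definition run_word (r : seq (E * X)) : seq E := map fst r.
Definition run_end (x : X) (r : seq (E * X)) : X := last x (map snd r).
Definition run_states (x : X) (r : seq (E * X)) : seq X := x :: map snd r.

Definition proj (obs : pred E) (w : seq E) : seq E := filter obs w.

Definition step_rel : rel X := fun x y => [exists e, y \in @delta G x e].

(* hat X: states x with x in delta(x_s, w) for some x_s in X_S, w in Sigma^*
   (w = empty gives X_S itself); reachability = reflexive-transitive closure *)
Definition reach_from (XS : {set X}) : {set X} :=
  [set x | [exists xs in XS, connect step_rel xs x]].

Definition K_SSO (obs : pred E) (XS : {set X}) (K : nat) : Prop :=
  forall (x0 : X) (rs : seq (E * X)) (rt : seq (E * X)),
    x0 \in @init G -> is_run x0 rs -> run_end x0 rs \in XS ->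
    is_run (run_end x0 rs) rt -> size (proj obs (run_word rt)) <= K ->
    exists (x0' : X) (rs' rt' : seq (E * X)),
      [/\ x0' \in @init G, is_run x0' rs', is_run (run_end x0' rs') rt' &
        [/\ proj obs (run_word rs') = proj obs (run_word rs),
          proj obs (run_word rt') = proj obs (run_word rt) &
          all (fun y => y \notin XS) (run_states (run_end x0' rs') rt')]].

Definition Inf_SSO (obs : pred E) (XS : {set X}) : Prop :=
  forall K : nat, K_SSO obs XS K.
End Runs.

(* Main.v *)
Require Import Defs.
From mathcomp Require Import all_boot.
From mathcomp Require Import zify.
From Stdlib Require Import ClassicalEpsilon.

Set Implicit Arguments. Unset Strict Implicit. Unset Printing Implicit Defensive.

Definition asb (P : Prop) : bool :=
  if excluded_middle_informative P then true else false.

Lemma asbP (P : Prop) : reflect P (asb P).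
Proof. by rewrite /asb; case: excluded_middle_informative => h; constructor. Qed.

Lemma is_run_cat (G : nfa) (x : stT G) (r1 r2 : seq (evT G * stT G)) :
  is_run x (r1 ++ r2) = is_run x r1 && is_run (run_end x r1) r2.
Proof.
elim: r1 x => [|[e y] r1 IH] x //=.
by rewrite IH andbA.
Qed.

Lemma run_end_cat (G : nfa) (x : stT G) (r1 r2 : seq (evT G * stT G)) :
  run_end x (r1 ++ r2) = run_end (run_end x r1) r2.
Proof. by rewrite /run_end map_cat last_cat. Qed.

Lemma run_states_cat (G : nfa) (x : stT G) (r1 r2 : seq (evT G * stT G)) :
  run_states x (r1 ++ r2) = run_states x r1 ++ map snd r2.
Proof. by rewrite /run_states map_cat. Qed.

Lemma proj_word_cat (G : nfa) (obs : pred (evT G)) (r1 r2 : seq (evT G * stT G)) :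
  proj obs (run_word (r1 ++ r2)) = proj obs (run_word r1) ++ proj obs (run_word r2).
Proof. by rewrite /proj /run_word map_cat filter_cat. Qed.

Lemma run_end_in (G : nfa) (x : stT G) (r : seq (evT G * stT G)) :
  run_end x r \in run_states x r.
Proof. exact: mem_last. Qed.

Lemma run_reach (G : nfa) (x : stT G) (r : seq (evT G * stT G)) :
  is_run x r -> connect (@step_rel G) x (run_end x r).
Proof.
elim: r x => [|[e y] r IH] x /=; first by rewrite connect0.
move=> /andP[hy hr]; apply: connect_trans (IH _ hr).
by apply: connect1; apply/existsP; exists e.
Qed.

Lemma split_run (G : nfa) (obs : pred (evT G)) (r : seq (evT G * stT G)) w1 u :
  proj obs (run_word r) = w1 ++ u ->
  exists r1 r2, [/\ r = r1 ++ r2, proj obs (run_word r1) = w1 &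
                    proj obs (run_word r2) = u].
Proof.
elim: r w1 => [|[e y] r IH] w1.
  case: w1 => [|a w1] //= hu; by exists [::], [::].
case: w1 => [|a w1] /=.
  move=> h; exists [::], ((e, y) :: r); split => //.
rewrite /proj /run_word /=; case he: (obs e) => /=.
  case=> <- h; case: (IH w1 h) => r1 [r2 [-> h1 h2]].
  by exists ((e, y) :: r1), r2; split => //=; rewrite -h1 /proj /run_word /= he.
move=> h; case: (IH (a :: w1) h) => r1 [r2 [-> h1 h2]].
by exists ((e, y) :: r1), r2; split => //=; rewrite /proj /run_word /= he.
Qed.

Fixpoint pre (E X : Type) (obs : pred E) (k : nat) (r : seq (E * X)) {struct r}
  : seq (E * X) :=
  match k, r with
  | 0, _ => [::]
  | _, [::] => [::]
  | k'.+1, (e, y) :: r' => (e, y) :: (if obs e then pre obs k' r' else pre obs k'.+1 r')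
  end.

Lemma pre_cat (E X : Type) (obs : pred E) k (r : seq (E * X)) :
  exists rest, r = pre obs k r ++ rest.
Proof.
elim: r k => [|[e y] r IH] [|k] /=; try by eexists.
case: (obs e).
  by case: (IH k) => rest {1}->; exists rest.
by case: (IH k.+1) => rest {1}->; exists rest.
Qed.

Lemma pre_mono (E X : Type) (obs : pred E) i j (r : seq (E * X)) :
  i <= j -> exists m, pre obs j r = pre obs i r ++ m.
Proof.
elim: r i j => [|[e y] r IH] [|i] [|j] //= hij; try by eexists.
case: (obs e).
  by case: (IH i j hij) => m ->; exists m.
by case: (IH i.+1 j.+1 hij) => m ->; exists m.
Qed.

Lemma pre_size (G : nfa) (obs : pred (evT G)) k (r : seq (evT G * stT G)) :
  size (proj obs (run_word (pre obs k r))) = minn k (size (proj obs (run_word r))).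
Proof.
elim: r k => [|[e y] r IH] [|k] //=.
  by rewrite min0n.
move: (IH k) (IH k.+1); rewrite /proj /run_word /=; case: (obs e) => /= h1 h2.
  by rewrite h1 minnSS.
by rewrite h2.
Qed.

Definition Concl (G : nfa) (obs : pred (evT G)) (XS : {set stT G})
  (rs rt : seq (evT G * stT G)) : Prop :=
    exists (x0' : stT G) (rs' rt' : seq (evT G * stT G)),
      [/\ x0' \in @init G, is_run x0' rs', is_run (run_end x0' rs') rt' &
        [/\ proj obs (run_word rs') = proj obs (run_word rs),
          proj obs (run_word rt') = proj obs (run_word rt) &
          all (fun y => y \notin XS) (run_states (run_end x0' rs') rt')]].

Definition W (G : nfa) (obs : pred (evT G)) (XS : {set stT G})
  (ps w : seq (evT G)) (x : stT G) : Prop :=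
  exists (x0' : stT G) (rs' rt' : seq (evT G * stT G)),
    x0' \in @init G /\ is_run x0' rs' /\ is_run (run_end x0' rs') rt' /\
    proj obs (run_word rs') = ps /\ proj obs (run_word rt') = w /\
    run_end (run_end x0' rs') rt' = x /\
    all (fun y => y \notin XS) (run_states (run_end x0' rs') rt').

Lemma ConclW (G : nfa) (obs : pred (evT G)) (XS : {set stT G}) rs rt :
  Concl obs XS rs rt <->
  exists x, W obs XS (proj obs (run_word rs)) (proj obs (run_word rt)) x.
Proof.
split.
  case=> x0' [rs' [rt' [h1 h2 h3 [h4 h5 h6]]]].
  by exists (run_end (run_end x0' rs') rt'), x0', rs', rt'.
case=> x [x0' [rs' [rt' [h1 [h2 [h3 [h4 [h5 [h6 h7]]]]]]]]].
by exists x0', rs', rt'.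
Qed.

Lemma W_notin (G : nfa) (obs : pred (evT G)) (XS : {set stT G}) ps w x :
  W obs XS ps w x -> x \notin XS.
Proof.
case=> x0' [rs' [rt' [_ [_ [_ [_ [_ [<- h7]]]]]]]].
exact: (allP h7 _ (run_end_in _ _)).
Qed.

Lemma splice (G : nfa) (obs : pred (evT G)) (XS : {set stT G}) ps w1 w2 u x :
  (forall z, W obs XS ps w1 z <-> W obs XS ps w2 z) ->
  W obs XS ps (w1 ++ u) x -> W obs XS ps (w2 ++ u) x.
Proof.
move=> hQ [x0' [rs' [rt' [h1 [h2 [h3 [h4 [h5 [h6 h7]]]]]]]]].
case: (split_run h5) => r1 [r2 [Er e1 e2]].
subst rt'.
move: h3; rewrite is_run_cat => /andP[h3a h3b].
move: h7; rewrite run_states_cat all_cat => /andP[h7a h7b].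
have : W obs XS ps w1 (run_end (run_end x0' rs') r1).
  by exists x0', rs', r1.
case/hQ => x1 [rs1 [rt1 [g1 [g2 [g3 [g4 [g5 [g6 g7]]]]]]]].
exists x1, rs1, (rt1 ++ r2); split => //; split => //.
split; first by rewrite is_run_cat g3 g6.
split => //; split; first by rewrite proj_word_cat g5 e2.
split; first by rewrite run_end_cat g6 -run_end_cat.
by rewrite run_states_cat all_cat g7.
Qed.

Lemma main_ind (G : nfa) (obs : pred (evT G)) (XS : {set stT G}) K :
  XS != set0 -> K.+1 = #|reach_from XS| * 2 ^ #|~: XS| ->
  K_SSO obs XS K ->
  forall n x0 rs rt,
    x0 \in @init G -> is_run x0 rs -> run_end x0 rs \in XS ->
    is_run (run_end x0 rs) rt -> size (proj obs (run_word rt)) <= n ->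
    Concl obs XS rs rt.
Proof.
move=> hXS hK hSSO n; elim: n => [|n IHn] x0 rs rt h0 hrs hxs hrt hn.
  apply: (hSSO x0 rs rt) => //; lia.
set sz := size (proj obs (run_word rt)).
have [hle|hgt] := leqP sz K; first exact: (hSSO x0 rs rt).
set xs := run_end x0 rs.
set ps := proj obs (run_word rs).
pose Qs (k : nat) := [set x | asb (W obs XS ps (proj obs (run_word (pre obs k rt))) x)].
pose f (k : 'I_sz) := (run_end xs (pre obs k rt), Qs k).
have prun : forall k, is_run xs (pre obs k rt).
  move=> k; case: (pre_cat obs k rt) => rest Er.
  by move: hrt; rewrite {1}Er is_run_cat => /andP[].
have psize : forall k, k <= sz -> size (proj obs (run_word (pre obs k rt))) = k.
  by move=> k hk; rewrite pre_size -/sz; apply/minn_idPl.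
have key : forall i j : 'I_sz, i < j -> f i = f j -> Concl obs XS rs rt.
  move=> i j hij [E1 E2].
  case: (pre_mono obs rt (ltnW hij)) => m Ej.
  case: (pre_cat obs j rt) => rest Er.
  have Eproj : proj obs (run_word rt) =
      proj obs (run_word (pre obs j rt)) ++ proj obs (run_word rest).
    by rewrite {1}Er proj_word_cat.
  have hr2 : is_run xs (pre obs i rt ++ rest).
    rewrite is_run_cat prun E1 /=.
    by move: hrt; rewrite {1}Er is_run_cat => /andP[].
  have hsz2 : size (proj obs (run_word (pre obs i rt ++ rest))) <= n.
    have e2 : sz = j + size (proj obs (run_word rest)).
      have := congr1 size Eproj; rewrite size_cat psize //; last exact: ltnW.
    have e1 : size (proj obs (run_word (pre obs i rt ++ rest))) =
              i + size (proj obs (run_word rest)).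
      by rewrite proj_word_cat size_cat psize //; apply: ltnW.
    rewrite e1; clear -hn e2 hij; lia.
  have := IHn x0 rs _ h0 hrs hxs hr2 hsz2.
  case/ConclW => x hW; apply/ConclW; exists x.
  rewrite Eproj; move: hW; rewrite proj_word_cat -/ps; apply: splice => z.
  have : (z \in Qs i) = (z \in Qs j) by rewrite E2.
  rewrite !inE => e; split => h.
    by apply/asbP; rewrite -e; apply/asbP.
  by apply/asbP; rewrite e; apply/asbP.
have hcod : forall k : 'I_sz,
    f k \in setX (reach_from XS) (powerset (~: XS) :\ set0).
  move=> k; rewrite inE /= !inE; apply/and3P; split.
  - apply/existsP; exists xs; rewrite hxs /=; exact: run_reach.
  - apply/set0Pn.
    have hk : k <= n by rewrite -ltnS; exact: leq_trans (ltn_ord k) hn.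
    have := IHn x0 rs (pre obs k rt) h0 hrs hxs (prun k).
    rewrite psize; last exact: ltnW.
    move=> /(_ hk) /ConclW [x hW]; exists x; rewrite inE; exact/asbP.
  - apply/subsetP => x; rewrite !inE => /asbP hW; exact: W_notin hW.
have : ~~ injectiveb f.
  apply/negP => /injectiveP finj.
  have h1 := card_imset (mem [set: 'I_sz]) finj.
  have h2 : f @: [set: 'I_sz] \subset setX (reach_from XS) (powerset (~: XS) :\ set0).
    by apply/subsetP => z /imsetP [k _ ->].
  have := subset_leq_card h2; rewrite h1 cardsT card_ord cardsX.
  have := cardsD1 set0 (powerset (~: XS)); rewrite card_powerset.
  have -> : (set0 \in powerset (~: XS)) by rewrite powersetE sub0set.
  move: hK hgt; set N := #|reach_from XS|; set P := 2 ^ #|~: XS|.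
  move=> hK hgt hP hle.
  have hN : 0 < N by move: hK; case: (N) => [|]; rewrite ?mul0n.
  have : N * #|powerset (~: XS) :\ set0| < N * P.
    by rewrite ltn_pmul2l // hP add1n.
  lia.
case/injectivePn => i [j hij hf].
case: (ltngtP i j) => h.
- exact: key h hf.
- exact: key h (esym hf).
- by move: hij; rewrite (val_inj h) eqxx.
Qed.

Theorem corollary3p2 (G : nfa) (obs : pred (evT G)) (XS : {set stT G}) :
  XS != set0 ->
  (Inf_SSO obs XS <->
   K_SSO obs XS (#|reach_from XS| * 2 ^ #|~: XS| - 1)).
Proof.
move=> hXS; split; first by move=> h; apply: h.
move=> hK K' x0 rs rt h0 hrs hxs hrt _.
have hN : 0 < #|reach_from XS|.
  case/set0Pn: hXS => x hx; apply/card_gt0P; exists x.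
  by rewrite inE; apply/existsP; exists x; rewrite hx connect0.
have hP : 0 < 2 ^ #|~: XS| by rewrite expn_gt0.
have e : (#|reach_from XS| * 2 ^ #|~: XS| - 1).+1 = #|reach_from XS| * 2 ^ #|~: XS|.
  by rewrite subn1 prednK // muln_gt0 hN hP.
exact: (main_ind hXS e hK h0 hrs hxs hrt (leqnn _)).
Qed.
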